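(* Let $\Delta>0$, $L>0$ and $\epsilon\in[0,L)$ (in the paper's normalization $L=1$, this is $\epsilon\in[0,1)$). Let $\mathcal{A}$ be any (deterministic or randomized) algorithm which, at each iteration $t$, chooses a query point $x_t$ as a (possibly random) function of the previously queried points and the oracle answers received so far, and receives as answer the function value $f(x_t)$ and an element of the generalized gradient $\partial f(x_t)$. Then for every finite $T$ there exists $f\in\mathcal{F}(\Delta,L)$ such that, when $\mathcal{A}$ is run on $f$, the probability that the sequence $\{x_t\}_{t=1}^T$ contains an $\epsilon$-stationary point of $f$ is at most $\tfrac12$.
   Context: Clarke generalized gradient: $f^\circ(x;d):=\limsup_{y\to x,\,t\downarrow0}\frac{f(y+td)-f(y)}{t}$ and $\partial f(x):=\{g:\langle g,d\rangle\le f^\circ(x;d)\ \forall d\}$. A point $x$ is $\epsilon$-stationary if $\min\{\|g\|:g\in\partial f(x)\}\le\epsilon$. $f$ is directionally differentiable (Hadamard) if for all $x,d$ and all $\varphi:\mathbb{R}_+\to\mathbb{R}^n$ with $\varphi(0)=x$, $\lim_{t\to0^+}(\varphi(t)-\varphi(0))/t=d$, the limit $f'(x;d)=\lim_{t\to0^+}(f(\varphi(t))-f(x))/t$ exists. Given a fixed initial point $x_0$, $\mathcal{F}(\Delta,L)$ is the set of $f:\mathbb{R}^n\to\mathbb{R}$ that are $L$-Lipschitz, directionally differentiable at every point, and satisfy $f(x_0)-\inf_x f(x)\le\Delta$. *)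

(* Defs.v *)
From Stdlib Require Fin.
From Stdlib Require Import Reals Lra List.
Open Scope R_scope.

Definition Vec (n : nat) : Type := Fin.t n -> R.

Fixpoint fsum (n : nat) : (Fin.t n -> R) -> R :=
  match n return (Fin.t n -> R) -> R with
  | O => fun _ => 0
  | S m => fun v => v Fin.F1 + fsum m (fun i => v (Fin.FS i))
  end.

Definition vadd {n} (x y : Vec n) : Vec n := fun i => x i + y i.
Definition vsub {n} (x y : Vec n) : Vec n := fun i => x i - y i.
Definition vscale {n} (a : R) (x : Vec n) : Vec n := fun i => a * x i.
Definition inner {n} (x y : Vec n) : R := fsum n (fun i => x i * y i).
Definition norm {n} (x : Vec n) : R := sqrt (inner x x).

(* r = limsup_{y -> x, t -> 0+} (f(y + t d) - f(y)) / t  (as a real number) *)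
Definition clarke_dd {n} (f : Vec n -> R) (x d : Vec n) (r : R) : Prop :=
  (forall e, 0 < e -> exists delta, 0 < delta /\
     forall (y : Vec n) (t : R), norm (vsub y x) < delta -> 0 < t < delta ->
       (f (vadd y (vscale t d)) - f y) / t <= r + e) /\
  (forall e delta, 0 < e -> 0 < delta -> exists (y : Vec n) (t : R),
       norm (vsub y x) < delta /\ 0 < t < delta /\
       r - e < (f (vadd y (vscale t d)) - f y) / t).

Definition clarke_subgrad {n} (f : Vec n -> R) (x g : Vec n) : Prop :=
  forall (d : Vec n) (r : R), clarke_dd f x d r -> inner g d <= r.

Definition eps_stationary {n} (f : Vec n -> R) (eps : R) (x : Vec n) : Prop :=
  exists g, clarke_subgrad f x g /\ norm g <= eps.

Definition lipschitz {n} (L : R) (f : Vec n -> R) : Prop :=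
  forall x y : Vec n, Rabs (f x - f y) <= L * norm (vsub x y).

Definition hadamard_dir_diff {n} (f : Vec n -> R) : Prop :=
  forall (x d : Vec n) (phi : R -> Vec n),
    phi 0 = x ->
    (forall e, 0 < e -> exists delta, 0 < delta /\ forall t, 0 < t < delta ->
        norm (vsub (vscale (/ t) (vsub (phi t) (phi 0))) d) < e) ->
    exists l, forall e, 0 < e -> exists delta, 0 < delta /\ forall t, 0 < t < delta ->
        Rabs ((f (phi t) - f x) / t - l) < e.

Definition in_class {n} (x0 : Vec n) (Delta L : R) (f : Vec n -> R) : Prop :=
  lipschitz L f /\ hadamard_dir_diff f /\ (forall x, f x0 - f x <= Delta).

Record ProbSpace (Omega : Type) := {
  meas : (Omega -> Prop) -> Prop;
  meas_full : meas (fun _ => True);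
  meas_compl : forall A, meas A -> meas (fun w => ~ A w);
  meas_union : forall A : nat -> Omega -> Prop,
      (forall k, meas (A k)) -> meas (fun w => exists k, A k w);
  prob : (Omega -> Prop) -> R;
  prob_nonneg : forall A, meas A -> 0 <= prob A;
  prob_full : prob (fun _ => True) = 1;
  prob_sigma_add : forall A : nat -> Omega -> Prop,
      (forall k, meas (A k)) ->
      (forall i j w, i <> j -> A i w -> A j w -> False) ->
      infinite_sum (fun k => prob (A k)) (prob (fun w => exists k, A k w))
}.
Arguments meas {Omega} _ _.
Arguments prob {Omega} _ _.

Definition history (n : nat) : Type := list (Vec n * R * Vec n).

Definition algorithm (n : nat) (Omega : Type) : Type := Omega -> history n -> Vec n.

Definition valid_oracle {n} (f : Vec n -> R) (O : Vec n -> Vec n) : Prop :=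
  forall x, clarke_subgrad f x (O x).

Fixpoint run {n} (a : history n -> Vec n) (f : Vec n -> R) (O : Vec n -> Vec n)
    (t : nat) : history n :=
  match t with
  | O => nil
  | S t' => let h := run a f O t' in let x := a h in h ++ ((x, f x, O x) :: nil)
  end.

(* the (t+1)-th query point x_{t+1} *)
Definition query {n} (a : history n -> Vec n) f O (t : nat) : Vec n := a (run a f O t).

Definition finds_stationary {n Omega} (A : algorithm n Omega) (f : Vec n -> R)
    (O : Vec n -> Vec n) (eps : R) (T : nat) : Omega -> Prop :=
  fun w => exists t, (t < T)%nat /\ eps_stationary f eps (query (A w) f O t).

(* Main.v *)
Require Import Defs.
From Stdlib Require Import Reals.
From Stdlib Require Import Lra Lia List Psatz.
From Stdlib Require Import Classical ClassicalEpsilon FunctionalExtensionality PropExtensionality.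
Open Scope R_scope.


Lemma fsum_ext n (u v : Fin.t n -> R) : (forall i, u i = v i) -> fsum n u = fsum n v.
Proof. induction n; simpl; intros H; [reflexivity|]. rewrite H, (IHn (fun i => u (Fin.FS i)) (fun i => v (Fin.FS i))); auto. Qed.

Lemma fsum_zero n : fsum n (fun _ => 0) = 0.
Proof. induction n; simpl; [reflexivity|]. rewrite IHn; ring. Qed.

Lemma fsum_nonneg n (v : Fin.t n -> R) : (forall i, 0 <= v i) -> 0 <= fsum n v.
Proof. induction n; simpl; intros H; [lra|]. specialize (IHn (fun i => v (Fin.FS i))). pose proof (H Fin.F1). assert (0 <= fsum n (fun i => v (Fin.FS i))) by (apply IHn; auto). lra. Qed.

Lemma fsum_scal n a (v : Fin.t n -> R) : fsum n (fun i => a * v i) = a * fsum n v.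
Proof. induction n; simpl; [ring|]. rewrite (IHn (fun i => v (Fin.FS i))). ring. Qed.

Lemma fsum_sub n (u v : Fin.t n -> R) : fsum n (fun i => u i - v i) = fsum n u - fsum n v.
Proof. induction n; simpl; [ring|]. rewrite (IHn (fun i => u (Fin.FS i)) (fun i => v (Fin.FS i))). ring. Qed.

Lemma fsum_eq0 n (v : Fin.t n -> R) : (forall i, 0 <= v i) -> fsum n v = 0 -> forall i, v i = 0.
Proof.
  induction n; intros H1 H2 i. { inversion i. }
  simpl in H2. pose proof (H1 Fin.F1).
  assert (0 <= fsum n (fun i => v (Fin.FS i))) by (apply fsum_nonneg; auto).
  apply (Fin.caseS' i (fun i => v i = 0)).
  - lra.
  - intro p. apply (IHn (fun i => v (Fin.FS i))); auto. lra.
Qed.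

Definition e1 {m} : Vec (S m) := fun i => match i with Fin.F1 => 1 | Fin.FS _ => 0 end.

Lemma coord_le_norm m (v : Vec (S m)) : Rabs (v Fin.F1) <= norm v.
Proof.
  unfold norm, inner. simpl. rewrite <- sqrt_Rsqr_abs. apply sqrt_le_1_alt.
  unfold Rsqr. assert (0 <= fsum m (fun i => v (Fin.FS i) * v (Fin.FS i))).
  { apply fsum_nonneg. intros; nra. } lra.
Qed.

Lemma norm_e1 m (x : Vec (S m)) u : norm (vsub (vadd x (vscale u e1)) x) = Rabs u.
Proof.
  unfold norm, inner, vsub, vadd, vscale. simpl.
  rewrite (fsum_ext _ _ (fun _ => 0)). 2:{ intros; simpl; ring. }
  rewrite fsum_zero, <- sqrt_Rsqr_abs. f_equal. unfold Rsqr. ring.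
Qed.

Lemma norm_zero n (x : Vec n) : norm (vsub x x) = 0.
Proof. unfold norm, inner, vsub. rewrite (fsum_ext _ _ (fun _ => 0)). 2:{ intros; ring. }
  rewrite fsum_zero. apply sqrt_0. Qed.

Lemma inner_e1 m (g : Vec (S m)) a : inner g (vscale a e1) = a * g Fin.F1.
Proof. unfold inner, vscale. simpl. rewrite (fsum_ext _ _ (fun _ => 0)). 2:{ intros; simpl; ring. }
  rewrite fsum_zero. ring. Qed.

Lemma abs_le_iff x M : Rabs x <= M <-> -M <= x <= M.
Proof. split_Rabs; split; intros; lra. Qed.
Lemma abs_lt_iff x M : Rabs x < M <-> -M < x < M.
Proof. split_Rabs; split; intros; lra. Qed.


Definition Fx {m} (x0 : Vec (S m)) (phi : R -> R) (x : Vec (S m)) : R := phi (x Fin.F1 - x0 Fin.F1).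

Lemma clarke_affine m (x0 x : Vec (S m)) phi a b del :
  0 < del -> (forall Y, Rabs (Y - (x Fin.F1 - x0 Fin.F1)) < del -> phi Y = a * Y + b) ->
  forall d, clarke_dd (Fx x0 phi) x d (a * d Fin.F1).
Proof.
  intros Hd Hl d. set (X := x Fin.F1 - x0 Fin.F1) in *.
  set (D := Rabs (d Fin.F1)).
  assert (HD : 0 <= D) by apply Rabs_pos.
  split.
  - intros e He. exists (del / (2 + 2 * D)). split.
    { apply Rdiv_lt_0_compat; lra. }
    intros y t Hy Ht.
    pose proof (coord_le_norm m (vsub y x)) as Hc. unfold vsub at 1 in Hc.
    assert (Hq : del / (2 + 2 * D) * (2 + 2*D) = del) by (field; lra).
    assert (E1 : Rabs (y Fin.F1 - x0 Fin.F1 - X) < del).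
    { unfold X. replace (y Fin.F1 - x0 Fin.F1 - (x Fin.F1 - x0 Fin.F1)) with (y Fin.F1 - x Fin.F1) by ring.
      assert (del / (2 + 2 * D) <= del) by nra. lra. }
    assert (E2 : Rabs (y Fin.F1 + t * d Fin.F1 - x0 Fin.F1 - X) < del).
    { unfold X. replace (y Fin.F1 + t * d Fin.F1 - x0 Fin.F1 - (x Fin.F1 - x0 Fin.F1)) with
        ((y Fin.F1 - x Fin.F1) + t * d Fin.F1) by ring.
      eapply Rle_lt_trans. apply Rabs_triang. rewrite Rabs_mult, (Rabs_right t) by lra.
      fold D. assert (t * D <= del / (2 + 2 * D) * D) by (apply Rmult_le_compat_r; lra). nra. }
    unfold Fx, vadd, vscale. rewrite (Hl _ E1), (Hl _ E2).
    replace ((a * (y Fin.F1 + t * d Fin.F1 - x0 Fin.F1) + b - (a * (y Fin.F1 - x0 Fin.F1) + b)) / t)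
      with (a * d Fin.F1) by (field; lra). lra.
  - intros e del0 He Hd0. set (t := Rmin del0 (del / (1 + D)) / 2). exists x, t.
    assert (0 < del / (1 + D)) by (apply Rdiv_lt_0_compat; lra).
    assert (0 < Rmin del0 (del / (1 + D))) by (apply Rmin_glb_lt; lra).
    pose proof (Rmin_l del0 (del / (1 + D))). pose proof (Rmin_r del0 (del / (1 + D))).
    assert (Hq : del / (1 + D) * (1 + D) = del) by (field; lra).
    split; [rewrite norm_zero; lra|]. split; [unfold t; lra|].
    assert (E2 : Rabs (x Fin.F1 + t * d Fin.F1 - x0 Fin.F1 - X) < del).
    { unfold X. replace (x Fin.F1 + t * d Fin.F1 - x0 Fin.F1 - (x Fin.F1 - x0 Fin.F1)) with (t * d Fin.F1) by ring.
      rewrite Rabs_mult, (Rabs_right t) by (unfold t; lra). fold D.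
      assert (t * D <= del / (1 + D) * D) by (apply Rmult_le_compat_r; unfold t; lra). nra. }
    assert (E1 : Rabs (x Fin.F1 - x0 Fin.F1 - X) < del) by (unfold X; rewrite Rminus_diag, Rabs_R0; lra).
    unfold Fx, vadd, vscale. rewrite (Hl _ E1), (Hl _ E2).
    replace ((a * (x Fin.F1 + t * d Fin.F1 - x0 Fin.F1) + b - (a * (x Fin.F1 - x0 Fin.F1) + b)) / t)
      with (a * d Fin.F1) by (field; unfold t; lra). lra.
Qed.

Lemma inner_e1' m (g : Vec (S m)) : inner g e1 = g Fin.F1.
Proof. unfold inner. simpl. rewrite (fsum_ext _ _ (fun _ => 0)). 2:{ intros; simpl; ring. }
  rewrite fsum_zero. ring. Qed.

Lemma inner_neg n (g d : Vec n) : inner g (vscale (-1) d) = - inner g d.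
Proof. unfold inner, vscale. rewrite (fsum_ext _ _ (fun i => -1 * (g i * d i))) by (intros; ring).
  rewrite fsum_scal. ring. Qed.

Lemma subgrad_unique m (f : Vec (S m) -> R) x a g :
  (forall d, clarke_dd f x d (a * d Fin.F1)) -> clarke_subgrad f x g -> g = vscale a e1.
Proof.
  intros Hd Hg.
  assert (Hin : forall d, inner g d = a * d Fin.F1).
  { intro d. pose proof (Hg d _ (Hd d)). pose proof (Hg _ _ (Hd (vscale (-1) d))).
    rewrite inner_neg in H0. unfold vscale in H0. lra. }
  set (v := vsub g (vscale a e1)).
  assert (Hv : inner v v = 0).
  { unfold v at 1. unfold inner, vsub. rewrite (fsum_ext _ _ (fun i => g i * v i - vscale a e1 i * v i)) by (intros; ring).
    rewrite fsum_sub. fold (inner g v). fold (inner (vscale a e1) v). rewrite Hin.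
    unfold inner, vscale. simpl. rewrite (fsum_ext _ _ (fun _ => 0)). 2:{ intros; simpl; ring. }
    rewrite fsum_zero. ring. }
  apply functional_extensionality. intro i.
  pose proof (fsum_eq0 (S m) (fun i => v i * v i) (fun i => ltac:(nra)) Hv i) as H.
  simpl in H. unfold v, vsub in H. nra.
Qed.

Lemma not_stat_e1 m (f : Vec (S m) -> R) x r eps s :
  clarke_dd f x e1 r -> r <= - s -> eps < s -> ~ eps_stationary f eps x.
Proof.
  intros Hc Hr He [g [Hg Hn]]. pose proof (Hg _ _ Hc). rewrite inner_e1' in H.
  pose proof (coord_le_norm m g). split_Rabs; lra.
Qed.

Lemma not_stat_affine m (x0 x : Vec (S m)) phi a b del eps :
  0 < del -> (forall Y, Rabs (Y - (x Fin.F1 - x0 Fin.F1)) < del -> phi Y = a * Y + b) ->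
  eps < Rabs a -> ~ eps_stationary (Fx x0 phi) eps x.
Proof.
  intros Hd Hl Ha [g [Hg Hn]].
  pose proof (Hg _ _ (clarke_affine m x0 x phi a b del Hd Hl e1)).
  pose proof (Hg _ _ (clarke_affine m x0 x phi a b del Hd Hl (vscale (-1) e1))).
  rewrite inner_e1' in H. rewrite inner_neg, inner_e1' in H0. unfold vscale, e1 in H0.
  simpl in H. unfold e1 in H.
  pose proof (coord_le_norm m g). split_Rabs; nra.
Qed.

Lemma clarke_1d m (x0 x : Vec (S m)) phi r :
  (exists del, 0 < del /\ forall u v, Rabs (u - (x Fin.F1 - x0 Fin.F1)) < del ->
      Rabs (v - (x Fin.F1 - x0 Fin.F1)) < del -> u < v -> phi v - phi u <= r * (v - u)) ->
  (forall del, 0 < del -> exists u t, Rabs (u - (x Fin.F1 - x0 Fin.F1)) < del /\ 0 < t < del /\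
      phi (u + t) - phi u >= r * t) ->
  clarke_dd (Fx x0 phi) x e1 r.
Proof.
  intros [del [Hd Hu]] Hw. set (X := x Fin.F1 - x0 Fin.F1) in *. split.
  - intros e He. exists (del / 2). split; [lra|]. intros y t Hy Ht.
    pose proof (coord_le_norm m (vsub y x)) as Hc. unfold vsub at 1 in Hc.
    unfold Fx, vadd, vscale, e1.
    replace (y Fin.F1 + t * 1 - x0 Fin.F1) with ((y Fin.F1 - x0 Fin.F1) + t) by ring.
    assert (H1 : Rabs (y Fin.F1 - x0 Fin.F1 - X) < del).
    { unfold X. replace (y Fin.F1 - x0 Fin.F1 - (x Fin.F1 - x0 Fin.F1)) with (y Fin.F1 - x Fin.F1) by ring. lra. }
    assert (H2 : Rabs (y Fin.F1 - x0 Fin.F1 + t - X) < del).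
    { unfold X. replace (y Fin.F1 - x0 Fin.F1 + t - (x Fin.F1 - x0 Fin.F1)) with ((y Fin.F1 - x Fin.F1) + t) by ring.
      eapply Rle_lt_trans. apply Rabs_triang. rewrite (Rabs_right t) by lra. lra. }
    pose proof (Hu _ _ H1 H2 ltac:(lra)).
    apply Rle_trans with r; [|lra].
    apply (Rmult_le_reg_r t); [lra|]. unfold Rdiv. rewrite Rmult_assoc, Rinv_l by lra. lra.
  - intros e del0 He Hd0. destruct (Hw del0 Hd0) as [u [t [H1 [H2 H3]]]].
    exists (vadd x (vscale (u - X) e1)), t. split; [rewrite norm_e1; exact H1|]. split; [lra|].
    unfold Fx, vadd, vscale, e1.
    replace (x Fin.F1 + (u - X) * 1 + t * 1 - x0 Fin.F1) with (u + t) by (unfold X; ring).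
    replace (x Fin.F1 + (u - X) * 1 - x0 Fin.F1) with u by (unfold X; ring).
    apply Rlt_le_trans with r; [lra|].
    apply (Rmult_le_reg_r t); [lra|]. unfold Rdiv. rewrite Rmult_assoc, Rinv_l by lra. lra.
Qed.


Definition LTL (g : R -> R) := forall X, exists a b del, 0 < del /\
  forall h, Rabs h < del -> g (X + h) - g X = b * Rmax h 0 + a * Rmin h 0.

Lemma Rmax_scale t z : 0 < t -> Rmax (t * z) 0 = t * Rmax z 0.
Proof. intros. unfold Rmax. destruct (Rle_dec (t*z) 0), (Rle_dec z 0); nra. Qed.
Lemma Rmin_scale t z : 0 < t -> Rmin (t * z) 0 = t * Rmin z 0.
Proof. intros. unfold Rmin. destruct (Rle_dec (t*z) 0), (Rle_dec z 0); nra. Qed.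
Lemma Rmax_lip z d : Rabs (Rmax z 0 - Rmax d 0) <= Rabs (z - d).
Proof. unfold Rmax. destruct (Rle_dec z 0), (Rle_dec d 0); split_Rabs; lra. Qed.
Lemma Rmin_lip z d : Rabs (Rmin z 0 - Rmin d 0) <= Rabs (z - d).
Proof. unfold Rmin. destruct (Rle_dec z 0), (Rle_dec d 0); split_Rabs; lra. Qed.

Lemma hadamard_of_LTL m (x0 : Vec (S m)) g : LTL g -> hadamard_dir_diff (Fx x0 g).
Proof.
  intros HL x d phi Hp0 Hconv. set (X := x Fin.F1 - x0 Fin.F1).
  destruct (HL X) as [a [b [del [Hd Hh]]]].
  set (d1 := d Fin.F1).
  exists (b * Rmax d1 0 + a * Rmin d1 0). intros e He.
  set (C := Rabs a + Rabs b + 1).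
  assert (HC : 0 < C) by (unfold C; pose proof (Rabs_pos a); pose proof (Rabs_pos b); lra).
  set (e' := Rmin 1 (e / C)).
  assert (He' : 0 < e') by (apply Rmin_glb_lt; [lra| apply Rdiv_lt_0_compat; lra]).
  destruct (Hconv e' He') as [del1 [Hd1 H1]].
  set (D := Rabs d1 + 2).
  assert (HD : 0 < D) by (unfold D; pose proof (Rabs_pos d1); lra).
  exists (Rmin del1 (del / D)). split.
  { apply Rmin_glb_lt; [lra | apply Rdiv_lt_0_compat; lra]. }
  intros t Ht.
  pose proof (Rmin_l del1 (del / D)). pose proof (Rmin_r del1 (del / D)).
  specialize (H1 t ltac:(lra)).
  pose proof (coord_le_norm m (vsub (vscale (/ t) (vsub (phi t) (phi 0))) d)) as Hc.
  change ((vsub (vscale (/ t) (vsub (phi t) (phi 0))) d) Fin.F1) with (/ t * (phi t Fin.F1 - phi 0 Fin.F1) - d Fin.F1) in Hc.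
  rewrite Hp0 in Hc, H1. fold d1 in Hc.
  set (z := / t * (phi t Fin.F1 - x Fin.F1)) in *.
  assert (Hz : Rabs (z - d1) < e') by lra.
  assert (He1 : e' <= 1) by apply Rmin_l. assert (He2 : e' <= e / C) by apply Rmin_r.
  assert (Hz1 : Rabs (z - d1) < 1) by lra.
  assert (Hze : Rabs (z - d1) < e / C) by lra.
  assert (Htz : phi t Fin.F1 - x Fin.F1 = t * z) by (unfold z; field; lra).
  assert (Hh' : Rabs (t * z) < del).
  { rewrite Rabs_mult, (Rabs_right t) by lra.
    assert (Rabs z <= Rabs d1 + 1) by (split_Rabs; lra).
    assert (Hq : del / D * D = del) by (field; lra).
    assert (t * Rabs z <= t * (Rabs d1 + 1)) by (apply Rmult_le_compat_l; lra).
    assert (Ht2 : t < del / D) by lra.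
    assert (t * (Rabs d1 + 1) < t * D) by (apply Rmult_lt_compat_l; unfold D; lra).
    assert (t * D < del / D * D) by (apply Rmult_lt_compat_r; lra). lra. }
  specialize (Hh _ Hh').
  unfold Fx.
  replace (phi t Fin.F1 - x0 Fin.F1) with (X + t * z) by (unfold X; lra). fold X.
  rewrite Hh, Rmax_scale, Rmin_scale by lra.
  replace ((b * (t * Rmax z 0) + a * (t * Rmin z 0)) / t) with (b * Rmax z 0 + a * Rmin z 0) by (field; lra).
  replace (b * Rmax z 0 + a * Rmin z 0 - (b * Rmax d1 0 + a * Rmin d1 0))
    with (b * (Rmax z 0 - Rmax d1 0) + a * (Rmin z 0 - Rmin d1 0)) by ring.
  eapply Rle_lt_trans. apply Rabs_triang. rewrite !Rabs_mult.
  pose proof (Rmax_lip z d1). pose proof (Rmin_lip z d1).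
  pose proof (Rabs_pos a). pose proof (Rabs_pos b).
  assert (Hq : e / C * C = e) by (field; lra).
  assert (Rabs b * Rabs (Rmax z 0 - Rmax d1 0) <= Rabs b * Rabs (z - d1)) by (apply Rmult_le_compat_l; lra).
  assert (Rabs a * Rabs (Rmin z 0 - Rmin d1 0) <= Rabs a * Rabs (z - d1)) by (apply Rmult_le_compat_l; lra).
  assert ((Rabs a + Rabs b) * Rabs (z - d1) < e).
  { pose proof (Rabs_pos (z - d1)).
    assert (C * Rabs (z - d1) < C * (e / C)) by (apply Rmult_lt_compat_l; lra).
    assert ((Rabs a + Rabs b) * Rabs (z - d1) <= C * Rabs (z - d1)) by (apply Rmult_le_compat_r; unfold C; lra).
    nra. }
  nra.
Qed.

Lemma LTL_affine a b : LTL (fun Y => a * Y + b).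
Proof. intro X. exists a, a, 1. split; [lra|]. intros h _.
  unfold Rmax, Rmin. destruct (Rle_dec h 0); ring. Qed.

Lemma LTL_neg g : LTL g -> LTL (fun Y => - g Y).
Proof. intros H X. destruct (H X) as [a [b [del [Hd Hh]]]]. exists (-a), (-b), del. split; auto.
  intros h Hh'. specialize (Hh h Hh'). lra. Qed.

Lemma LTL_max u v : LTL u -> LTL v -> LTL (fun Y => Rmax (u Y) (v Y)).
Proof.
  intros Hu Hv X. destruct (Hu X) as [au [bu [du [Hdu Hhu]]]]. destruct (Hv X) as [av [bv [dv [Hdv Hhv]]]].
  set (Cu := Rabs au + Rabs bu). set (Cv := Rabs av + Rabs bv).
  assert (Bu : forall h, Rabs h < du -> Rabs (u (X + h) - u X) <= Cu * Rabs h).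
  { intros h Hh. rewrite (Hhu h Hh). unfold Cu, Rmax, Rmin. destruct (Rle_dec h 0); split_Rabs; nra. }
  assert (Bv : forall h, Rabs h < dv -> Rabs (v (X + h) - v X) <= Cv * Rabs h).
  { intros h Hh. rewrite (Hhv h Hh). unfold Cv, Rmax, Rmin. destruct (Rle_dec h 0); split_Rabs; nra. }
  assert (HCu : 0 <= Cu) by (unfold Cu; pose proof (Rabs_pos au); pose proof (Rabs_pos bu); lra).
  assert (HCv : 0 <= Cv) by (unfold Cv; pose proof (Rabs_pos av); pose proof (Rabs_pos bv); lra).
  destruct (Rtotal_order (u X) (v X)) as [Hlt | [Heq | Hgt]].
  - set (G := v X - u X). exists av, bv, (Rmin (Rmin du dv) (G / (Cu + Cv + 1))). split.
    { repeat apply Rmin_glb_lt; try lra. apply Rdiv_lt_0_compat; unfold G; lra. }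
    intros h Hh. pose proof (Rmin_l (Rmin du dv) (G / (Cu + Cv + 1))). pose proof (Rmin_r (Rmin du dv) (G / (Cu + Cv + 1))).
    pose proof (Rmin_l du dv). pose proof (Rmin_r du dv).
    pose proof (Bu h ltac:(lra)) as B1. pose proof (Bv h ltac:(lra)) as B2.
    apply abs_le_iff in B1. apply abs_le_iff in B2.
    assert (HG : 0 < G) by (unfold G; lra).
    assert (Hq : G / (Cu + Cv + 1) * (Cu + Cv + 1) = G) by (field; lra).
    assert (Hc : (Cu + Cv) * Rabs h < G).
    { pose proof (Rabs_pos h). assert (Rabs h < G / (Cu + Cv + 1)) by lra.
      assert ((Cu + Cv + 1) * Rabs h < (Cu + Cv + 1) * (G / (Cu + Cv + 1))) by (apply Rmult_lt_compat_l; lra).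
      nra. }
    unfold G in Hc.
    assert (Huv : u (X + h) <= v (X + h)) by nra.
    rewrite (Rmax_right _ _ Huv), Rmax_right by lra. apply Hhv. lra.
  - exists (Rmin au av), (Rmax bu bv), (Rmin du dv). split; [apply Rmin_glb_lt; lra|].
    intros h Hh. pose proof (Rmin_l du dv). pose proof (Rmin_r du dv).
    pose proof (Hhu h ltac:(lra)). pose proof (Hhv h ltac:(lra)).
    rewrite Heq, (Rmax_left (v X) (v X)) by lra.
    assert (E1 : u (X + h) = v X + (bu * Rmax h 0 + au * Rmin h 0)) by lra.
    assert (E2 : v (X + h) = v X + (bv * Rmax h 0 + av * Rmin h 0)) by lra.
    rewrite E1, E2. clear - Heq.
    unfold Rmax, Rmin. destruct (Rle_dec h 0); destruct (Rle_dec au av); destruct (Rle_dec bu bv);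
      destruct (Rle_dec (v X + (bu * h + au * 0)) (v X + (bv * h + av * 0))); 
      destruct (Rle_dec (v X + (bu * 0 + au * h)) (v X + (bv * 0 + av * h))); try nra.
  - set (G := u X - v X). exists au, bu, (Rmin (Rmin du dv) (G / (Cu + Cv + 1))). split.
    { repeat apply Rmin_glb_lt; try lra. apply Rdiv_lt_0_compat; unfold G; lra. }
    intros h Hh. pose proof (Rmin_l (Rmin du dv) (G / (Cu + Cv + 1))). pose proof (Rmin_r (Rmin du dv) (G / (Cu + Cv + 1))).
    pose proof (Rmin_l du dv). pose proof (Rmin_r du dv).
    pose proof (Bu h ltac:(lra)) as B1. pose proof (Bv h ltac:(lra)) as B2.
    apply abs_le_iff in B1. apply abs_le_iff in B2.
    assert (HG : 0 < G) by (unfold G; lra).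
    assert (Hq : G / (Cu + Cv + 1) * (Cu + Cv + 1) = G) by (field; lra).
    assert (Hc : (Cu + Cv) * Rabs h < G).
    { pose proof (Rabs_pos h). assert (Rabs h < G / (Cu + Cv + 1)) by lra.
      assert ((Cu + Cv + 1) * Rabs h < (Cu + Cv + 1) * (G / (Cu + Cv + 1))) by (apply Rmult_lt_compat_l; lra).
      nra. }
    unfold G in Hc.
    assert (Huv : v (X + h) <= u (X + h)) by nra.
    rewrite (Rmax_left _ _ Huv), Rmax_left by lra. apply Hhu. lra.
Qed.


Definition phi (s L K c : R) (Y : R) : R := Rmax (Rmin (-s*Y) (-s*c - L*(Y - c))) (L*Y - K).
Definition pp (s L K c : R) : R := (K + (L - s) * c) / (2 * L).

Section P.
Variables s L K c : R.
Hypothesis Hs : 0 < s.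
Hypothesis HsL : s < L.
Hypothesis Hc : 0 <= c.
Hypothesis HcK : (L + s) * c < K.

Lemma pp_eq : 2 * L * pp s L K c = K + (L - s) * c.
Proof. unfold pp. field. lra. Qed.

Lemma c_lt_p : c < pp s L K c.
Proof. pose proof pp_eq. nra. Qed.

Lemma p_lt_cm : (L + s) * pp s L K c < K.
Proof. pose proof pp_eq. nra. Qed.

Lemma piece1 Y : Y <= c -> phi s L K c Y = - s * Y.
Proof. intros HY. pose proof pp_eq. unfold phi, Rmax, Rmin.
  destruct (Rle_dec (-s*Y) (-s*c - L*(Y - c))); [|nra].
  destruct (Rle_dec (-s*Y) (L*Y - K)); nra. Qed.

Lemma piece2 Y : c <= Y <= pp s L K c -> phi s L K c Y = - s * c - L * (Y - c).
Proof. intros HY. pose proof pp_eq. pose proof p_lt_cm. unfold phi, Rmax, Rmin.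
  destruct (Rle_dec (-s*Y) (-s*c - L*(Y - c))).
  - assert (Y = c) by nra. subst. destruct (Rle_dec (-s*c) (L*c - K)); nra.
  - destruct (Rle_dec (-s*c - L*(Y - c)) (L*Y - K)); nra. Qed.

Lemma piece3 Y : pp s L K c <= Y -> phi s L K c Y = L * Y - K.
Proof. intros HY. pose proof pp_eq. pose proof c_lt_p. unfold phi, Rmax, Rmin.
  destruct (Rle_dec (-s*Y) (-s*c - L*(Y - c))).
  - destruct (Rle_dec (-s*Y) (L*Y - K)); nra.
  - destruct (Rle_dec (-s*c - L*(Y - c)) (L*Y - K)); nra. Qed.

Lemma phi_min Y : L * pp s L K c - K <= phi s L K c Y.
Proof. pose proof pp_eq. pose proof c_lt_p.
  destruct (Rle_dec Y c). { rewrite piece1 by auto. nra. }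
  destruct (Rle_dec Y (pp s L K c)). { rewrite piece2 by lra. nra. }
  rewrite piece3 by lra. nra. Qed.

Lemma phi_0 : phi s L K c 0 = 0.
Proof. rewrite piece1 by lra. ring. Qed.

Lemma max_lip a b a' b' M : Rabs (a - a') <= M -> Rabs (b - b') <= M -> Rabs (Rmax a b - Rmax a' b') <= M.
Proof. unfold Rmax. destruct (Rle_dec a b), (Rle_dec a' b'); split_Rabs; lra. Qed.
Lemma min_lip a b a' b' M : Rabs (a - a') <= M -> Rabs (b - b') <= M -> Rabs (Rmin a b - Rmin a' b') <= M.
Proof. unfold Rmin. destruct (Rle_dec a b), (Rle_dec a' b'); split_Rabs; lra. Qed.

Lemma phi_lip Y Z : Rabs (phi s L K c Y - phi s L K c Z) <= L * Rabs (Y - Z).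
Proof. unfold phi. apply max_lip; [apply min_lip|].
  - replace (- s * Y - - s * Z) with (-s * (Y - Z)) by ring. rewrite Rabs_mult.
    apply Rmult_le_compat_r; [apply Rabs_pos|]. rewrite Rabs_left; lra.
  - replace (- s * c - L * (Y - c) - (- s * c - L * (Z - c))) with (-L * (Y - Z)) by ring. rewrite Rabs_mult.
    rewrite Rabs_left by lra. lra.
  - replace (L * Y - K - (L * Z - K)) with (L * (Y - Z)) by ring. rewrite Rabs_mult, Rabs_right by lra. lra.
Qed.

Lemma LTL_ext g g' : LTL g -> (forall Y, g Y = g' Y) -> LTL g'.
Proof. intros H E X. destruct (H X) as [a [b [d [Hd Hh]]]]. exists a, b, d. split; auto.
  intros h Hh'. rewrite <- !E. auto. Qed.

Lemma LTL_phi : LTL (phi s L K c).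
Proof.
  assert (Hm : forall u v, LTL u -> LTL v -> LTL (fun Y => Rmin (u Y) (v Y))).
  { intros u v Hu Hv. apply (LTL_ext (fun Y => - Rmax (- u Y) (- v Y))). apply (LTL_neg (fun Y => Rmax (- u Y) (- v Y))), (LTL_max (fun Y => - u Y) (fun Y => - v Y)); apply LTL_neg; auto.
    intro Y. cbv beta. unfold Rmin, Rmax. destruct (Rle_dec (u Y) (v Y)), (Rle_dec (- u Y) (- v Y)); lra. }
  unfold phi. apply LTL_max.
  - apply Hm.
    + eapply LTL_ext. apply (LTL_affine (-s) 0). intro; cbv beta; ring.
    + eapply LTL_ext. apply (LTL_affine (-L) (-s*c + L*c)). intro; cbv beta; ring.
  - eapply LTL_ext. apply (LTL_affine L (-K)). intro; cbv beta; ring.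
Qed.

Lemma phi_nonstat m (x0 x : Vec (S m)) eps :
  0 <= eps < s -> x Fin.F1 - x0 Fin.F1 <> pp s L K c ->
  ~ eps_stationary (Fx x0 (phi s L K c)) eps x.
Proof.
  intros He Hne. pose proof c_lt_p as Hcp. set (X := x Fin.F1 - x0 Fin.F1) in *. set (p := pp s L K c) in *.
  destruct (Rtotal_order X c) as [H1 | [H1 | H1]].
  - apply (not_stat_affine m x0 x _ (-s) 0 (c - X)); [lra| |rewrite Rabs_left; lra].
    intros Y HY. fold X in HY. apply abs_lt_iff in HY. rewrite piece1 by lra. ring.
  - apply (not_stat_e1 m _ x (-s) eps s); [|lra|lra].
    apply clarke_1d.
    + exists (p - c). split; [lra|]. intros u v Hu Hv Huv. fold X in Hu, Hv.
      apply abs_lt_iff in Hu. apply abs_lt_iff in Hv.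
      destruct (Rle_dec v c).
      * rewrite !piece1 by lra. lra.
      * rewrite (piece2 v) by (unfold p in *; lra).
        destruct (Rle_dec u c).
        -- rewrite piece1 by lra. nra.
        -- rewrite (piece2 u) by (unfold p in *; lra). nra.
    + intros del Hd. exists (c - del / 2), (del / 2). fold X. split.
      { replace (c - del / 2 - X) with (- (del / 2)) by lra. rewrite Rabs_Ropp, Rabs_right; lra. }
      split; [lra|]. replace (c - del / 2 + del / 2) with c by ring.
      rewrite !piece1 by lra. lra.
  - destruct (Rtotal_order X p) as [H2 | [H2 | H2]]; [|contradiction|].
    + apply (not_stat_affine m x0 x _ (-L) (-s*c + L*c) (Rmin (X - c) (p - X)));
        [apply Rmin_glb_lt; lra| |rewrite Rabs_left; lra].
      intros Y HY. fold X in HY. apply abs_lt_iff in HY.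
      pose proof (Rmin_l (X - c) (p - X)). pose proof (Rmin_r (X - c) (p - X)).
      rewrite piece2 by (unfold p in *; lra). ring.
    + apply (not_stat_affine m x0 x _ L (-K) (X - p)); [lra| |rewrite Rabs_right; lra].
      intros Y HY. fold X in HY. apply abs_lt_iff in HY. rewrite piece3 by (unfold p in *; lra). ring.
Qed.

End P.


Lemma run_S n (a : history n -> Vec n) f O t :
  run a f O (S t) = (a nil, f (a nil), O (a nil)) :: run (fun h => a ((a nil, f (a nil), O (a nil)) :: h)) f O t.
Proof.
  induction t. { reflexivity. }
  change (run a f O (S (S t))) with (run a f O (S t) ++ ((a (run a f O (S t)), f (a (run a f O (S t))), O (a (run a f O (S t)))) :: nil)).
  rewrite IHt. reflexivity.
Qed.

Lemma query_S n (a : history n -> Vec n) f O t e :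
  e = (a nil, f (a nil), O (a nil)) ->
  query a f O (S t) = query (fun h => a (e :: h)) f O t.
Proof. intros ->. unfold query. rewrite run_S. reflexivity. Qed.

Definition indR (P : Prop) : R := if excluded_middle_informative P then 1 else 0.
Fixpoint cnt (P : nat -> Prop) (l : list nat) : R :=
  match l with nil => 0 | j :: l' => indR (P j) + cnt P l' end.

Lemma cnt_nonneg P l : 0 <= cnt P l.
Proof. induction l; simpl; [lra|]. unfold indR. destruct excluded_middle_informative; lra. Qed.

Lemma cnt_split3 P Q1 Q2 Q3 l : (forall j, P j -> Q1 j \/ Q2 j \/ Q3 j) ->
  cnt P l <= cnt Q1 l + cnt Q2 l + cnt Q3 l.
Proof. intros H. induction l; simpl; [lra|]. unfold indR.
  destruct (excluded_middle_informative (P a)) as [p|p];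
  destruct (excluded_middle_informative (Q1 a)); destruct (excluded_middle_informative (Q2 a));
  destruct (excluded_middle_informative (Q3 a)); try lra.
  exfalso. destruct (H a p) as [?|[?|?]]; auto.
Qed.

Lemma cnt_false P l : (forall j, ~ P j) -> cnt P l = 0.
Proof. intros H. induction l; simpl; [lra|]. unfold indR. destruct excluded_middle_informative; [exfalso; eapply H; eauto|lra]. Qed.

Lemma cnt_false_in P l : (forall j, In j l -> ~ P j) -> cnt P l = 0.
Proof. intros H. induction l; simpl; [lra|]. unfold indR. destruct excluded_middle_informative as [p|p].
  - exfalso. eapply H; [left; eauto| eauto].
  - rewrite IHl; [lra|]. intros; apply H; right; auto. Qed.

Lemma cnt_unique P l : (forall j j', P j -> P j' -> j = j') -> NoDup l -> cnt P l <= 1.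
Proof. intros H Hn. induction Hn; simpl; [lra|]. unfold indR. destruct excluded_middle_informative as [p|p].
  - rewrite cnt_false_in; [lra|]. intros j Hj Pj. rewrite (H _ _ p Pj) in H0. auto.
  - lra. Qed.

Section Tree.
Variable m : nat.
Variable x0 : Vec (S m).
Variables s L K eps : R.
Variable cs : nat -> R.
Variable O : nat -> Vec (S m) -> Vec (S m).
Hypothesis Hs : 0 < s.
Hypothesis HsL : s < L.
Hypothesis Heps : 0 <= eps < s.
Hypothesis Hc : forall j, 0 <= cs j.
Hypothesis HcK : forall j, (L + s) * cs j < K.
Hypothesis Hdisj : forall j j' X, cs j <= X <= pp s L K (cs j) -> cs j' <= X <= pp s L K (cs j') -> j = j'.

Definition fam (j : nat) : Vec (S m) -> R := Fx x0 (phi s L K (cs j)).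
Hypothesis HO : forall j, valid_oracle (fam j) (O j).

Definition succ (a : history (S m) -> Vec (S m)) (T : nat) (j : nat) : Prop :=
  exists t, (t < T)%nat /\ eps_stationary (fam j) eps (query a (fam j) (O j) t).

Lemma branch j a T e : e = (a nil, fam j (a nil), O j (a nil)) ->
  ~ eps_stationary (fam j) eps (a nil) -> succ a (S T) j -> succ (fun h => a (e :: h)) T j.
Proof.
  intros He Hns [t [Ht Hst]]. destruct t.
  - exfalso. apply Hns. exact Hst.
  - exists t. split; [lia|]. rewrite <- (query_S _ a (fam j) (O j) t e He). exact Hst.
Qed.

Lemma entry_left j (x : Vec (S m)) : x Fin.F1 - x0 Fin.F1 < cs j ->
  (x, -s * (x Fin.F1 - x0 Fin.F1), vscale (-s) (@e1 m)) = (x, fam j x, O j x).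
Proof.
  intros H1. set (X := x Fin.F1 - x0 Fin.F1) in *.
  assert (Hloc : forall Y, Rabs (Y - X) < cs j - X -> phi s L K (cs j) Y = -s * Y + 0).
  { intros Y HY. apply abs_lt_iff in HY. rewrite piece1 by first [apply Hc | apply HcK | lra]; ring. }
  assert (E1 : fam j x = -s * X) by (unfold fam, Fx; fold X; rewrite piece1; auto; lra).
  assert (E2 : O j x = vscale (-s) (@e1 m)).
  { apply (subgrad_unique m (fam j) x (-s)); [|apply HO].
    intro d. exact (clarke_affine m x0 x _ (-s) 0 (cs j - X) ltac:(lra) Hloc d). }
  rewrite E1, E2. reflexivity.
Qed.

Lemma entry_right j (x : Vec (S m)) : pp s L K (cs j) < x Fin.F1 - x0 Fin.F1 ->
  (x, L * (x Fin.F1 - x0 Fin.F1) - K, vscale L (@e1 m)) = (x, fam j x, O j x).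
Proof.
  intros H1. set (X := x Fin.F1 - x0 Fin.F1) in *.
  assert (Hloc : forall Y, Rabs (Y - X) < X - pp s L K (cs j) -> phi s L K (cs j) Y = L * Y + - K).
  { intros Y HY. apply abs_lt_iff in HY. rewrite piece3 by first [apply Hc | apply HcK | lra]; ring. }
  assert (E1 : fam j x = L * X - K) by (unfold fam, Fx; fold X; rewrite piece3; auto; lra).
  assert (E2 : O j x = vscale L (@e1 m)).
  { apply (subgrad_unique m (fam j) x L); [|apply HO].
    intro d. exact (clarke_affine m x0 x _ L (-K) (X - pp s L K (cs j)) ltac:(lra) Hloc d). }
  rewrite E1, E2. reflexivity.
Qed.

Lemma tree T : forall a (Sel : nat -> Prop) l, NoDup l ->
  cnt (fun j => Sel j /\ succ a T j) l <= 2 ^ T - 1.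
Proof.
  induction T; intros a Sel l Hn.
  - rewrite cnt_false. { simpl; lra. } intros j [_ [t [Ht _]]]. lia.
  - set (x := a nil). set (X := x Fin.F1 - x0 Fin.F1).
    set (eL := (x, -s * X, vscale (-s) (@e1 m))). set (eR := (x, L * X - K, vscale L (@e1 m))).
    eapply Rle_trans.
    apply (cnt_split3 _ (fun j => Sel j /\ cs j <= X <= pp s L K (cs j))
                        (fun j => (Sel j /\ X < cs j) /\ succ (fun h => a (eL :: h)) T j)
                        (fun j => (Sel j /\ pp s L K (cs j) < X) /\ succ (fun h => a (eR :: h)) T j)).
    + intros j [HS Hsu].
      assert (Hcp : cs j < pp s L K (cs j)) by (apply c_lt_p; auto).
      destruct (Rlt_dec X (cs j)) as [H1|H1]; [right; left | destruct (Rlt_dec (pp s L K (cs j)) X) as [H2|H2]; [right; right| left; split; auto; lra]].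
      * split; [auto|]. apply (branch j a T eL); auto.
        -- apply (entry_left j x H1).
        -- apply phi_nonstat; auto; fold x; fold X; lra.
      * split; [auto|]. apply (branch j a T eR); auto.
        -- apply (entry_right j x H2).
        -- apply phi_nonstat; auto; fold x; fold X; lra.
    + pose proof (IHT (fun h => a (eL :: h)) (fun j => Sel j /\ X < cs j) l Hn).
      pose proof (IHT (fun h => a (eR :: h)) (fun j => Sel j /\ pp s L K (cs j) < X) l Hn).
      assert (cnt (fun j => Sel j /\ cs j <= X <= pp s L K (cs j)) l <= 1).
      { apply cnt_unique; auto. intros j j' [_ H1] [_ H2]. eapply Hdisj; eauto. }
      simpl. lra.
Qed.

End Tree.


Lemma pred_ext {T} (A B : T -> Prop) : (forall w, A w <-> B w) -> A = B.
Proof. intros H. apply functional_extensionality. intro w. apply propositional_extensionality. auto. Qed.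

Section Prob.
Variable Omega : Type.
Variable P : ProbSpace Omega.

Lemma meas_empty : meas P (fun _ => False).
Proof. replace (fun _ : Omega => False) with (fun w : Omega => ~ (fun _ => True) w).
  apply meas_compl, meas_full. apply pred_ext. intros; tauto. Qed.

Lemma sum_const c n : sum_f_R0 (fun _ => c) n = INR (S n) * c.
Proof. induction n; simpl sum_f_R0. { simpl; ring. } rewrite IHn. rewrite (S_INR (S n)). ring. Qed.

Lemma prob_empty : prob P (fun _ => False) = 0.
Proof.
  pose proof (prob_sigma_add _ P (fun _ => fun _ => False) (fun _ => meas_empty) (fun i j w _ H _ => H)) as H.
  cbv beta in H.
  assert (E : (fun w : Omega => exists _ : nat, False) = (fun _ : Omega => False))
    by (apply pred_ext; intros w; split; [intros [_ []]|tauto]).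
  rewrite E in H.
  set (c := prob P (fun _ => False)) in *.
  destruct (Req_dec c 0) as [|Hne]; auto. exfalso.
  assert (Hc : 0 < Rabs c) by (apply Rabs_pos_lt; auto).
  destruct (H (Rabs c) Hc) as [N HN]. specialize (HN (S N) ltac:(lia)).
  rewrite sum_const in HN. unfold Rdist in HN.
  replace (INR (S (S N)) * c - c) with (INR (S N) * c) in HN by (rewrite (S_INR (S N)); ring).
  rewrite Rabs_mult, Rabs_right in HN by (apply Rle_ge, pos_INR).
  pose proof (pos_INR N). rewrite S_INR in HN. nra.
Qed.

Lemma meas_or A B : meas P A -> meas P B -> meas P (fun w => A w \/ B w).
Proof. intros HA HB.
  pose proof (meas_union _ P (fun k => match k with O => A | S _ => B end) ltac:(intros [|k]; auto)).
  replace (fun w => A w \/ B w) with (fun w => exists k, (match k with O => A | S _ => B end) w); auto.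
  apply pred_ext. intro w. split.
  - intros [[|k] H']; auto.
  - intros [H'|H']; [exists O | exists (S O)]; auto.
Qed.

Lemma meas_and A B : meas P A -> meas P B -> meas P (fun w => A w /\ B w).
Proof. intros HA HB.
  pose proof (meas_compl _ P _ (meas_or _ _ (meas_compl _ P _ HA) (meas_compl _ P _ HB))).
  replace (fun w => A w /\ B w) with (fun w => ~ (~ A w \/ ~ B w)); auto.
  apply pred_ext. intro w. tauto. Qed.

Lemma prob_add A B : meas P A -> meas P B -> (forall w, A w -> B w -> False) ->
  prob P (fun w => A w \/ B w) = prob P A + prob P B.
Proof.
  intros HA HB Hd.
  set (F := fun k => match k with O => A | S O => B | _ => fun _ : Omega => False end).
  assert (HF : forall k, meas P (F k)) by (intros [|[|k]]; simpl; auto using meas_empty).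
  assert (Hdisj : forall i j w, i <> j -> F i w -> F j w -> False).
  { intros [|[|i]] [|[|j]] w Hij; simpl; intros; try tauto; try lia; eauto. }
  pose proof (prob_sigma_add _ P F HF Hdisj) as H.
  replace (fun w => exists k, F k w) with (fun w => A w \/ B w) in H.
  2:{ apply pred_ext. intro w. split.
      - intros [H'|H']; [exists O | exists (S O)]; auto.
      - intros [[|[|k]] H']; simpl in H'; auto; contradiction. }
  apply (uniqueness_sum (fun k => prob P (F k))); auto.
  intros e He. exists (S O). intros k Hk.
  assert (sum_f_R0 (fun k => prob P (F k)) k = prob P A + prob P B).
  { induction k; [lia|]. destruct k.
    - simpl. reflexivity.
    - rewrite tech5, IHk by lia. simpl F. rewrite prob_empty. ring. }
  rewrite H0. unfold Rdist. rewrite Rminus_diag, Rabs_R0. auto.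
Qed.

Fixpoint lsum (v : nat -> R) (l : list nat) : R := match l with nil => 0 | j :: l' => v j + lsum v l' end.

Lemma measure_count (F : nat -> Omega -> Prop) l : (forall j, meas P (F j)) ->
  forall (G : Omega -> Prop) (mm : R), meas P G ->
  (forall w, G w -> cnt (fun j => F j w) l <= mm) ->
  lsum (fun j => prob P (fun w => F j w /\ G w)) l <= mm * prob P G.
Proof.
  intros HF. induction l as [|j l IH]; intros G mm HG Hc; simpl.
  - destruct (classic (exists w, G w)) as [[w Hw]|Hno].
    + pose proof (Hc w Hw). simpl in H. pose proof (prob_nonneg _ P G HG). nra.
    + replace G with (fun _ : Omega => False) by (apply pred_ext; intro w; split; [tauto|intro; apply Hno; eauto]).
      rewrite prob_empty. lra.
  - set (G1 := fun w => G w /\ F j w). set (G2 := fun w => G w /\ ~ F j w).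
    assert (HG1 : meas P G1) by (apply meas_and; auto).
    assert (HG2 : meas P G2) by (apply meas_and; auto; apply meas_compl; auto).
    assert (I1 : lsum (fun i => prob P (fun w => F i w /\ G1 w)) l <= (mm - 1) * prob P G1).
    { apply (IH G1 (mm - 1)); auto. intros w [Gw Fw]. pose proof (Hc w Gw). simpl in H. unfold indR in H. cbv beta in H.
      destruct (excluded_middle_informative (F j w)); [lra|contradiction]. }
    assert (I2 : lsum (fun i => prob P (fun w => F i w /\ G2 w)) l <= mm * prob P G2).
    { apply (IH G2 mm); auto. intros w [Gw Fw]. pose proof (Hc w Gw). simpl in H. unfold indR in H. cbv beta in H.
      destruct (excluded_middle_informative (F j w)); [contradiction|lra]. }
    assert (Hsplit : forall A, meas P A -> prob P (fun w => A w /\ G w) =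
        prob P (fun w => A w /\ G1 w) + prob P (fun w => A w /\ G2 w)).
    { intros A HA. rewrite <- prob_add.
      - f_equal. apply pred_ext. intro w. unfold G1, G2. tauto.
      - apply meas_and; auto.
      - apply meas_and; auto.
      - unfold G1, G2. tauto. }
    assert (E : lsum (fun i => prob P (fun w => F i w /\ G w)) l =
      lsum (fun i => prob P (fun w => F i w /\ G1 w)) l + lsum (fun i => prob P (fun w => F i w /\ G2 w)) l).
    { clear - Hsplit HF. induction l; simpl; [ring|]. rewrite Hsplit by auto. rewrite IHl. ring. }
    assert (EG : prob P G = prob P G1 + prob P G2).
    { rewrite <- prob_add; auto. f_equal. apply pred_ext. intro w. unfold G1, G2. tauto.
      unfold G1, G2. tauto. }
    assert (EJ : prob P (fun w => F j w /\ G w) = prob P G1).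
    { f_equal. apply pred_ext. intro w. unfold G1. tauto. }
    rewrite E, EG, EJ. nra.
Qed.

End Prob.


Lemma cnt_mono P Q l : (forall j, P j -> Q j) -> cnt P l <= cnt Q l.
Proof. intros H. eapply Rle_trans. apply (cnt_split3 P Q (fun _ => False) (fun _ => False)).
  intros j Pj; left; auto. rewrite !(cnt_false (fun _ => False)) by auto. lra. Qed.

Lemma lsum_lower (v : nat -> R) l : (forall j, In j l -> 1/2 < v j) -> INR (length l) / 2 <= lsum v l.
Proof. induction l; intros H; cbn [lsum length]. { simpl; lra. }
  assert (INR (length l) / 2 <= lsum v l) by (apply IHl; intros; apply H; right; auto).
  pose proof (H a (or_introl eq_refl)). rewrite S_INR. lra. Qed.

Lemma pow_mono q a b : 0 <= q <= 1 -> (a <= b)%nat -> q ^ b <= q ^ a.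
Proof. intros Hq Hab. replace b with (a + (b - a))%nat by lia. rewrite pow_add.
  assert (q ^ (b - a) <= 1) by (rewrite <- (pow1 (b - a)); apply pow_incr; lra).
  pose proof (pow_le q a ltac:(lra)). nra. Qed.

Theorem theorem1 :
  forall (n : nat) (x0 : Vec n) (Delta L eps : R),
    (1 <= n)%nat -> 0 < Delta -> 0 < L -> 0 <= eps < L ->
    forall (Omega : Type) (P : ProbSpace Omega) (A : algorithm n Omega) (T : nat),
      exists f : Vec n -> R,
        in_class x0 Delta L f /\
        forall O : Vec n -> Vec n, valid_oracle f O ->
          meas P (finds_stationary A f O eps T) ->
          prob P (finds_stationary A f O eps T) <= 1 / 2.
Proof.
  intros n x0 Delta L eps Hn HD HL Heps Omega P A T.
  destruct n as [|m]; [lia|].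
  set (s := (eps + L) / 2).
  set (q := (L - s) / (4 * L)). set (cm := Delta / (L + s)).
  set (cs := fun j : nat => cm * (1 - q ^ j)).
  assert (Hs : 0 < s) by (unfold s; lra). assert (HsL : s < L) by (unfold s; lra).
  assert (Hes : 0 <= eps < s) by (unfold s; lra).
  assert (Hq0 : 0 < q) by (unfold q; apply Rdiv_lt_0_compat; lra).
  assert (Hq4 : q * (4 * L) = L - s) by (unfold q; field; lra).
  assert (Hq1 : q < 1/4) by nra.
  assert (Hcm : 0 < cm) by (unfold cm; apply Rdiv_lt_0_compat; lra).
  assert (HcmK : (L + s) * cm = Delta) by (unfold cm; field; lra).
  assert (Hpow : forall j, 0 < q ^ j <= 1).
  { intro j. split; [apply pow_lt; lra|]. rewrite <- (pow1 j). apply pow_incr; lra. }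
  assert (Hc : forall j, 0 <= cs j) by (intro j; unfold cs; pose proof (Hpow j); nra).
  assert (HcK : forall j, (L + s) * cs j < Delta).
  { intro j. unfold cs. pose proof (Hpow j). rewrite <- HcmK. nra. }
  assert (Hlt : forall j j', (j < j')%nat -> pp s L Delta (cs j) < cs j').
  { intros j j' Hjj. pose proof (pp_eq s L Delta (cs j) Hs HsL) as Hp.
    assert (Hq' : q ^ j' <= q * q ^ j) by (change (q * q ^ j) with (q ^ (S j)); apply pow_mono; lra || lia).
    pose proof (Hpow j). pose proof (Hpow j').
    assert (H4 : 4 * L * q = L - s) by (unfold q; field; lra).
    apply (Rmult_lt_reg_l (2 * L)); [lra|]. rewrite Hp. unfold cs. rewrite <- HcmK.
    assert (E1 : 2 * L * cm * q ^ j' <= 2 * L * cm * (q * q ^ j)) by (apply Rmult_le_compat_l; [nra|lra]).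
    assert (E2 : 0 < 2 * L * cm * (q * q ^ j)).
    { assert (0 < q * q ^ j) by (apply Rmult_lt_0_compat; lra). assert (0 < 2 * L * cm) by (apply Rmult_lt_0_compat; lra). apply Rmult_lt_0_compat; lra. }
    assert (E3 : (L - s) * cm * q ^ j = 2 * (2 * L * cm * (q * q ^ j))) by (rewrite <- H4; ring).
    nra. }
  assert (Hdisj : forall j j' X, cs j <= X <= pp s L Delta (cs j) -> cs j' <= X <= pp s L Delta (cs j') -> j = j').
  { intros j j' X H1 H2. destruct (Nat.lt_total j j') as [H|[H|H]]; auto.
    - pose proof (Hlt _ _ H). lra.
    - pose proof (Hlt _ _ H). lra. }
  assert (Hclass : forall j, in_class x0 Delta L (fam m x0 s L Delta cs j)).
  { intro j. unfold fam. split; [|split].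
    - intros x y. unfold Fx. eapply Rle_trans; [apply phi_lip; auto|].
      apply Rmult_le_compat_l; [lra|].
      replace (x Fin.F1 - x0 Fin.F1 - (y Fin.F1 - x0 Fin.F1)) with (vsub x y Fin.F1) by (unfold vsub; ring).
      apply coord_le_norm.
    - apply hadamard_of_LTL, LTL_phi.
    - intro x. unfold Fx. rewrite Rminus_diag, phi_0 by auto.
      assert (L * pp s L Delta (cs j) - Delta <= phi s L Delta (cs j) (x Fin.F1 - x0 Fin.F1)) by (apply phi_min; auto).
      pose proof (pp_eq s L Delta (cs j) Hs HsL). pose proof (Hc j). nra. }
  apply NNPP. intro Hno.
  assert (Hex : forall j, exists O, valid_oracle (fam m x0 s L Delta cs j) O /\
      meas P (finds_stationary A (fam m x0 s L Delta cs j) O eps T) /\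
      1 / 2 < prob P (finds_stationary A (fam m x0 s L Delta cs j) O eps T)).
  { intro j. apply NNPP. intro Hj. apply Hno. exists (fam m x0 s L Delta cs j). split; auto.
    intros O HO Hm. apply Rnot_lt_le. intro Hp. apply Hj. exists O. auto. }
  set (Of := fun j => proj1_sig (constructive_indefinite_description _ (Hex j))).
  assert (HOf : forall j, valid_oracle (fam m x0 s L Delta cs j) (Of j) /\
      meas P (finds_stationary A (fam m x0 s L Delta cs j) (Of j) eps T) /\
      1 / 2 < prob P (finds_stationary A (fam m x0 s L Delta cs j) (Of j) eps T))
    by (intro j; unfold Of; destruct (constructive_indefinite_description _ (Hex j)); auto).
  set (k := (2 ^ (S T))%nat).
  set (Fj := fun j => finds_stationary A (fam m x0 s L Delta cs j) (Of j) eps T).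
  assert (Hup : lsum (fun j => prob P (fun w => Fj j w /\ True)) (seq 0 k) <= (2 ^ T - 1) * prob P (fun _ => True)).
  { apply measure_count.
    - intro j. apply HOf.
    - apply meas_full.
    - intros w _. eapply Rle_trans; [| apply (tree m x0 s L Delta eps cs Of Hs HsL Hes HcK Hdisj (fun j => proj1 (HOf j)) T (A w) (fun _ => True) (seq 0 k) (seq_NoDup k 0))].
      apply cnt_mono. intros j Hj. split; auto. }
  rewrite prob_full in Hup.
  assert (Hlow : INR (length (seq 0 k)) / 2 <= lsum (fun j => prob P (fun w => Fj j w /\ True)) (seq 0 k)).
  { apply lsum_lower. intros j _. 
    replace (fun w => Fj j w /\ True) with (Fj j) by (apply pred_ext; intro; tauto). apply HOf. }
  rewrite length_seq in Hlow. assert (Hk : INR k = 2 * 2 ^ T) by (unfold k; rewrite pow_INR; change (INR 2) with 2; simpl; ring). rewrite Hk in Hlow. lra.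
Qed.
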